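(* If $X$ is a Tychonoff $P$-space, then $T''(X)$ is a (Von Neumann) regular ring.
   Context: $C(X)$ is the ring of real-valued continuous functions on $X$; a cozero set is a set $\{x: h(x)\neq 0\}$ with $h\in C(X)$. $T''(X)$ is the ring (under pointwise operations) of all functions $f\colon X\to\mathbb{R}$ for which there is a dense cozero set $U$ of $X$ with $f|_U$ continuous. A commutative ring $R$ is regular if for each $a\in R$ there is $x\in R$ with $a=a^2x$. A $P$-space is a Tychonoff space in which every zero set is open. *)

(* Defs.v *)
From HB Require Import structures.
From mathcomp Require Import all_boot all_order all_algebra.
From mathcomp Require Import all_classical all_reals all_analysis.
Unset Printing Implicit Defensive.
Import Order.TTheory GRing.Theory Num.Theory.
Import numFieldNormedType.Exports.
Local Open Scope classical_set_scope.
Local Open Scope ring_scope.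

Definition completely_regular (R : realType) (X : topologicalType) :=
  forall (B : set X) (x : X), closed B -> ~ B x ->
  exists f : X -> R, continuous f /\ (forall y, 0 <= f y <= 1) /\
    f x = 0 /\ (forall y, B y -> f y = 1).

Definition tychonoff (R : realType) (X : topologicalType) :=
  completely_regular R X /\ accessible_space X.

Definition zero_set (R : realType) (X : topologicalType) (h : X -> R) : set X :=
  [set x | h x = 0].
Definition cozero_set (R : realType) (X : topologicalType) (h : X -> R) : set X :=
  [set x | h x != 0].

Definition is_cozero (R : realType) (X : topologicalType) (U : set X) :=
  exists h : X -> R, continuous h /\ U = cozero_set R X h.

Definition P_space (R : realType) (X : topologicalType) :=
  tychonoff R X /\
  (forall h : X -> R, continuous h -> open (zero_set R X h)).

(* T''(X): functions f : X -> R for which some dense cozero set U has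
   f|_U continuous (continuity of the restriction to the subspace U). *)
Definition T2 (R : realType) (X : topologicalType) : set (X -> R) :=
  [set f | exists U : set X, is_cozero R X U /\ dense U /\ {within U, continuous f}].

Definition regular_fun_ring (R : realType) (X : Type) (S : set (X -> R)) :=
  forall a, S a -> exists x, S x /\ a = (fun t => a t ^+ 2 * x t).

(* Main.v *)
Require Import Defs.
From HB Require Import structures.
From mathcomp Require Import all_boot all_order all_algebra.
From mathcomp Require Import all_classical all_reals all_analysis.
Import Order.TTheory GRing.Theory Num.Theory.
Import numFieldNormedType.Exports.
Local Open Scope classical_set_scope.
Local Open Scope ring_scope.

Theorem theorem3p0 (R : realType) (X : topologicalType) :
  P_space R X -> regular_fun_ring R X (T2 R X).
Proof.
move=> [_ PZ] f [U [[h [hc ->]] [dU fc]]].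
set V := cozero_set R X h.
have oZ : open (zero_set R X h) := PZ h hc.
have oV : open V.
  have -> : V = h @^-1` (~` [set 0]).
    by apply/seteqP; split => x /= /eqP.
  apply: open_comp; first by move=> y _; exact: hc.
  by apply: closed_openC; exact: closed_eq.
have fcV : {in V, continuous f} by rewrite -continuous_open_subspace.
pose g := fun t => if `[< V t >] then f t else 0.
have gc : continuous g.
  move=> t; case: (pselect (V t)) => Vt.
    have E : {near nbhs t, f =1 g}.
      have : nbhs t V by apply: open_nbhs_nbhs; split.
      apply: filterS => y Vy; by rewrite /g asboolT.
    have H : f @ t --> f t by apply: fcV; rewrite inE.
    rewrite /continuous_at {2}/g asboolT //.
    apply: cvg_trans H. exact: near_eq_cvg E.
  apply: cvg_near_cst.
  have : nbhs t (zero_set R X h).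
    apply: open_nbhs_nbhs; split => //.
    by rewrite /zero_set /=; apply/eqP; apply: contra_notT Vt.
  apply: filterS => y Zy; have Zy' : h y = 0 := Zy.
  have nV : ~ V y by rewrite /V /cozero_set /= Zy' eqxx.
  rewrite /g !asboolF //.
have oG := PZ g gc.
exists (fun t => (f t)^-1); split.
  exists V; split; first by exists h.
  split => //.
  rewrite continuous_open_subspace // => t; rewrite inE => Vt.
  have [ft0|ft0] := eqVneq (f t) 0.
    apply: cvg_near_cst.
    have : nbhs t (V `&` zero_set R X g).
      apply: open_nbhs_nbhs; split; first exact: openI.
      by split => //; rewrite /zero_set /= /g asboolT.
    apply: filterS => y [Vy Gy]; move: Gy; rewrite /zero_set /= /g asboolT //.
    by move=> ->; rewrite ft0 invr0.
  apply: continuousV => //; apply: fcV; by rewrite inE.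
apply: funext => t; have [ft0|ft0] := eqVneq (f t) 0.
  by rewrite ft0 expr2 !mul0r.
by rewrite expr2 mulrK // unitfE.
Qed.
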